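(* Let $X$ be a real normed linear space and let $\Omega_1,\Omega_2\subset X$ be nonempty convex sets such that $\operatorname{int}\Omega_1\neq\emptyset$ and $(\operatorname{int}\Omega_1)\cap\Omega_2=\emptyset$. Then $\Omega_1$ and $\Omega_2$ form an extremal system. Furthermore, $\operatorname{int}(\Omega_1-\Omega_2)\neq\emptyset$.
   Context: Two nonempty sets $\Omega_1,\Omega_2\subset X$ form an extremal system if for every $\varepsilon>0$ there exists $a\in X$ with $\|a\|\le\varepsilon$ and $(\Omega_1+a)\cap\Omega_2=\emptyset$. $\Omega_1-\Omega_2=\{x-y\mid x\in\Omega_1,\ y\in\Omega_2\}$, and $\operatorname{int}$ denotes the topological interior. *)

(* Defs.v *)
From HB Require Import structures.
From mathcomp Require Import all_boot all_order all_algebra.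
From mathcomp Require Import all_classical all_reals all_analysis.
Set Implicit Arguments. Unset Strict Implicit. Unset Printing Implicit Defensive.
Import Order.TTheory GRing.Theory Num.Theory.
Import numFieldNormedType.Exports.
Local Open Scope classical_set_scope.
Local Open Scope ring_scope.

Definition convex_in {R : realType} {X : normedModType R} (A : set X) : Prop :=
  forall x y (t : R), A x -> A y -> 0 <= t -> t <= 1 -> A (t *: x + (1 - t) *: y).

Definition extremal_system {R : realType} {X : normedModType R} (O1 O2 : set X) : Prop :=
  forall eps : R, 0 < eps ->
    exists a : X, `|a| <= eps /\ [set x + a | x in O1] `&` O2 = set0.

Definition set_diff_mink {R : realType} {X : normedModType R} (O1 O2 : set X) : set X :=
  [set z | exists x y, O1 x /\ O2 y /\ z = x - y].

(* Main.v *)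
Require Import Defs.
From HB Require Import structures.
From mathcomp Require Import all_boot all_order all_algebra.
From mathcomp Require Import all_classical all_reals all_analysis.
From mathcomp Require Import ring lra.
Import Order.TTheory GRing.Theory Num.Theory.
Import numFieldNormedType.Exports.
Local Open Scope classical_set_scope.
Local Open Scope ring_scope.

Lemma int_ballP (R : realType) (X : normedModType R) (A : set X) x :
  interior A x <-> exists2 r : R, 0 < r & forall y, `|x - y| < r -> A y.
Proof.
rewrite /interior nbhs_ballP; split.
  by move=> [r r0 H]; exists r => // y xy; apply: H; rewrite -ball_normE.
by move=> [r r0 H]; exists r => //= y; rewrite -ball_normE /=; apply: H.
Qed.

Lemma key (R : realType) (X : normedModType R) (A : set X) x0 x (m : R) :
  convex_in A -> interior A x0 -> A x -> 0 <= m -> m < 1 ->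
  interior A (m *: x + (1 - m) *: x0).
Proof.
move=> cA /int_ballP [r r0 H] Ax m0 m1.
have m1' : 0 < 1 - m by rewrite subr_gt0.
apply/int_ballP; exists ((1 - m) * r); first exact: mulr_gt0.
move=> z hz.
pose w := (1 - m)^-1 *: (z - m *: x).
have -> : z = m *: x + (1 - m) *: w.
  by rewrite /w scalerA divff ?gt_eqF // scale1r addrC subrK.
apply: cA => //; last exact: ltW.
apply: H.
have e : (1 - m) *: (x0 - w) = (m *: x + (1 - m) *: x0) - z.
  rewrite /w scalerBr scalerA divff ?gt_eqF // scale1r.
  rewrite opprB.
  by rewrite addrA [(1 - m) *: x0 + _]addrC.
have : `|(1 - m) *: (x0 - w)| < (1 - m) * r by rewrite e.
by rewrite normrZ ger0_norm ?ltW // ltr_pM2l.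
Qed.

Theorem corollary2p3 (R : realType) (X : normedModType R) (O1 O2 : set X) :
  O1 !=set0 -> O2 !=set0 -> convex_in O1 -> convex_in O2 ->
  (interior O1) !=set0 -> (interior O1) `&` O2 = set0 ->
  extremal_system O1 O2 /\ (interior (set_diff_mink O1 O2)) !=set0.
Proof.
move=> _ [y0 Oy0] cO1 cO2 [x0 ix0] dis.
have Ox0 : O1 x0 by exact: nbhs_singleton ix0.
split; last first.
  exists (x0 - y0); move: ix0 => /int_ballP [r r0 H].
  apply/int_ballP; exists r => // z hz.
  exists (z + y0), y0; split; last by split => //; rewrite addrK.
  by apply: H; rewrite opprD addrA addrAC.
move=> eps eps0.
have d0 : 0 < `|x0 - y0| + 1 by rewrite ltr_wpDl.
pose c := eps / (`|x0 - y0| + 1).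
have c0 : 0 < c by rewrite divr_gt0.
exists (c *: (x0 - y0)); split.
  rewrite normrZ gtr0_norm // /c -ler_pdivlMl // invf_div mulrC.
  by rewrite mulrC divfK ?gt_eqF // lerDl.
rewrite -subset0 => _ [[x Ox <-] Oy].
pose m := (1 + c)^-1.
have c1 : 0 < 1 + c by rewrite addr_gt0.
have m0 : 0 <= m by rewrite invr_ge0 ltW.
have m1 : m < 1 by rewrite invf_lt1 // ltrDl.
have mc : m * c = 1 - m.
  rewrite /m; move: c1; generalize c => c2 c3; field; by rewrite gt_eqF.
have := cO2 _ _ m Oy Oy0 m0 (ltW m1).
rewrite scalerDr scalerA mc scalerBr addrA.
rewrite subrK => Oz.
have iz := @key _ _ _ x0 x m cO1 ix0 Ox m0 m1.
have : (O1° `&` O2) (m *: x + (1 - m) *: x0) by split.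
by rewrite dis.
Qed.
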